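(* Assume only upper-bound group constraints and $\mathcal S\neq\emptyset$, and let $F$ be a maxmin-fair distribution over $\mathcal S$ for satisfaction $A=V$. Then $$\min_{u\in\mathcal U}F[u]\ =\ \min_{\emptyset\neq X\subseteq\mathcal U}\frac{H(X)}{|X|},\qquad\text{where } H(X)=\max_{r\in\mathcal S}\sum_{u\in X}V(r,u).$$
   Context: Ranking setting: $\mathcal U=\{u_1,\dots,u_n\}$ finite set of individuals partitioned into groups $C_1,\dots,C_t$; rankings are bijections $r:\mathcal U\to[n]$. Only upper bounds: $\mathcal S=\{r:\ |\{u\in C_k: r(u)\le i\}|\le u_i^k\ \forall i\in[n],k\in[t]\}$ for given integers $u_i^k$. $V(r,u)=f(r(u))-g(u)$ with $f:[n]\to\mathbb R$ non-increasing and $g:\mathcal U\to\mathbb R$ arbitrary. For a distribution $D$ over $\mathcal S$, $D[u]=\mathbb E_{r\sim D}[V(r,u)]$. $F$ is maxmin-fair if for every distribution $D$ over $\mathcal S$ and every $u$: $D[u]>F[u]$ implies there exists $v$ with $D[v]<F[v]\le F[u]$. *)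

(* Defs.v *)
From HB Require Import structures.
From mathcomp Require Import all_boot all_order all_algebra.
From mathcomp Require Import reals.
Set Implicit Arguments. Unset Strict Implicit. Unset Printing Implicit Defensive.
Import Order.TTheory GRing.Theory Num.Theory.
Local Open Scope ring_scope.

Section Ranking.
Variables (R : realType) (U : finType) (t : nat).
(* grp u = index k of the group C_k containing u (a partition of U). *)
Variable grp : U -> 'I_t.
(* ub k i = u_i^k, the upper bound for group k among the top i positions, i in [1,n]. *)
Variable ub : 'I_t -> nat -> nat.
(* f on positions 1..n, g on individuals. *)
Variables (f : nat -> R) (g : U -> R).

(* A candidate ranking: a function U -> 'I_n, position r u (0-based) means rank (r u).+1. *)
Definition ranking := {ffun U -> 'I_#|U|}.

Definition feasible (r : ranking) : bool :=
  injectiveb r &&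
  [forall i : 'I_#|U|, forall k : 'I_t,
      #|[set u | (grp u == k) && (r u <= i)%N]| <= ub k i.+1]%N.

Definition V (r : ranking) (u : U) : R := f (r u).+1 - g u.

Definition is_distr (D : {ffun ranking -> R}) : Prop :=
  (forall r, 0 <= D r) /\ (\sum_r D r = 1) /\ (forall r, D r != 0 -> feasible r).

Definition expV (D : {ffun ranking -> R}) (u : U) : R := \sum_r D r * V r u.

Definition maxmin_fair (F : {ffun ranking -> R}) : Prop :=
  is_distr F /\
  forall D u, is_distr D -> expV F u < expV D u ->
    exists v, expV D v < expV F v /\ expV F v <= expV F u.

Definition sumV (r : ranking) (X : {set U}) : R := \sum_(u in X) V r u.

Definition is_H (X : {set U}) (h : R) : Prop :=
  (exists2 r, feasible r & h = sumV r X) /\ (forall r, feasible r -> sumV r X <= h).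

End Ranking.

(* Main.v *)
Require Import Defs.
From HB Require Import structures.
From mathcomp Require Import all_boot all_order all_algebra.
From mathcomp Require Import reals.
From mathcomp Require Import zify ring lra.
Import Order.TTheory GRing.Theory Num.Theory.
Local Open Scope ring_scope.
Set Implicit Arguments. Unset Strict Implicit. Unset Printing Implicit Defensive.

Section Core.
Variables (R : realType) (U : finType) (t : nat).
Variable grp : U -> 'I_t.
Variable ub : 'I_t -> nat -> nat.

Definition tau (x y u : U) : U := if u == x then y else if u == y then x else u.

Lemma tauK x y : involutive (tau x y).
Proof.
move=> u; rewrite /tau.
case: (eqVneq u x) => [->|hux]; first by rewrite eqxx; case: eqVneq => // ->.
case: (eqVneq u y) => [->|huy]; first by rewrite eqxx.
by rewrite (negPf hux) (negPf huy).
Qed.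

Definition sw (r : ranking U) (x y : U) : ranking U := [ffun u => r (tau x y u)].

Lemma sw_inj (r : ranking U) (x y : U) : injectiveb r -> injectiveb (sw r x y).
Proof.
move=> /injectiveP hr; apply/injectiveP => u v; rewrite !ffunE => /hr.
exact: (can_inj (tauK x y)).
Qed.

Definition gcount (r : ranking U) (k : 'I_t) (i : nat) :=
  #|[set u | (grp u == k) && (r u <= i)%N]|.

Lemma sw_feasible (r : ranking U) (x y : U) :
  feasible grp ub r -> (r y < r x)%N ->
  (grp x != grp y -> forall i : nat, (r y <= i < r x)%N -> (gcount r (grp x) i < ub (grp x) i.+1)%N) ->
  feasible grp ub (sw r x y).
Proof.
move=> /andP[hinj /forallP hf] hyx hgap.
apply/andP; split; first exact: sw_inj.
apply/forallP => i; apply/forallP => k.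
have hxy : x != y by apply/eqP => exy; move: hyx; rewrite exy ltnn.
have := hf i => /forallP /(_ k) hle.
set S := [set u | (grp u == k) && (r u <= i)%N] in hle.
set S' := [set u | _ && _].
have swE u : sw r x y u = r (tau x y u) by rewrite ffunE.
have tx : tau x y x = y by rewrite /tau eqxx.
have ty : tau x y y = x by rewrite /tau eqxx eq_sym (negPf hxy).
have tu u : u != x -> u != y -> tau x y u = u by move=> h1 h2; rewrite /tau (negPf h1) (negPf h2).
case: (leqP (r x) i) => hxi.
  have -> : S' = S; last by [].
  apply/setP => u; rewrite !inE swE.
  case: (eqVneq u x) => [->|hux]; first by rewrite tx (leq_trans (ltnW hyx) hxi) hxi.
  case: (eqVneq u y) => [->|huy]; first by rewrite ty hxi (leq_trans (ltnW hyx) hxi).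
  by rewrite tu.
case: (ltnP i (r y)) => hiy.
  have h1 : (r y <= i)%N = false by apply/negbTE; rewrite -ltnNge.
  have h2 : (r x <= i)%N = false by apply/negbTE; rewrite -ltnNge (ltn_trans hiy hyx).
  have -> : S' = S; last by [].
  apply/setP => u; rewrite !inE swE.
  case: (eqVneq u x) => [->|hux]; first by rewrite tx h1 h2.
  case: (eqVneq u y) => [->|huy]; first by rewrite ty h1 h2.
  by rewrite tu.
have hS' : S' \subset x |: (S :\ y).
  apply/subsetP => u; rewrite !inE swE.
  case: (eqVneq u x) => [->|hux] //=.
  case: (eqVneq u y) => [->|huy] /=; first by rewrite ty leqNgt hxi andbF.
  by rewrite tu.
case: (eqVneq (grp x) k) => hxk; last first.
  apply: leq_trans hle; apply: subset_leq_card.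
  apply/subsetP => u; rewrite !inE swE.
  case: (eqVneq u x) => [->|hux] /=; first by rewrite (negPf hxk).
  case: (eqVneq u y) => [->|huy] /=; first by rewrite ty leqNgt hxi andbF.
  by rewrite tu.
apply: leq_trans (subset_leq_card hS') _.
rewrite cardsU1.
case: (eqVneq (grp y) k) => hyk.
  have yS : y \in S by rewrite inE hyk eqxx hiy.
  rewrite (cardsD1 y S) yS in hle; apply: leq_trans hle.
  by rewrite leq_add2r leq_b1.
have hne : grp x != grp y by rewrite hxk eq_sym.
have := hgap hne i; rewrite hiy hxi => /(_ isT).
rewrite /gcount hxk -/S => hlt.
apply: leq_trans (_ : 1 + #|S| <= _)%N; last by rewrite add1n.
apply: leq_add; [exact: leq_b1 | exact/subset_leq_card/subD1set].
Qed.


Lemma feas_inj (r : ranking U) : feasible grp ub r -> injective r.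
Proof. by case/andP => /injectiveP. Qed.

Lemma feas_gcount (r : ranking U) k (i : nat) : feasible grp ub r -> (i < #|U|)%N ->
  (gcount r k i <= ub k i.+1)%N.
Proof.
case/andP => _ /forallP hf hi.
by have := hf (Ordinal hi) => /forallP /(_ k).
Qed.

Variable X0 : {set U}.

Definition cnt (r : ranking U) (j : nat) := #|[set x in X0 | (r x < j)%N]|.
Definition cntk (r : ranking U) (k : 'I_t) (j : nat) :=
  #|[set x in X0 | (grp x == k) && (r x < j)%N]|.
Definition cntI (r : ranking U) (a b : nat) := #|[set x in X0 | (a <= r x < b)%N]|.

Lemma cnt_sum r j : cnt r j = (\sum_k cntk r k j)%N.
Proof.
rewrite /cnt -sum1_card (partition_big grp xpredT) //=.
apply: eq_bigr => k _; rewrite /cntk -[#|[set x in X0 | _]|]sum1_card; apply: eq_bigl => u.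
by rewrite !inE -andbA [(_ < j)%N && _]andbC.
Qed.

Lemma cnt_split r a b : (a <= b)%N -> cnt r b = (cnt r a + cntI r a b)%N.
Proof.
move=> hab; rewrite /cnt /cntI -cardsUI.
have -> : [set x in X0 | (r x < a)%N] :&: [set x in X0 | (a <= r x < b)%N] = set0.
  by apply/setP => u; rewrite !inE; case: (ltnP (r u) a); rewrite ?andbF.
rewrite cards0 addn0; try rewrite cards0 addn0; apply: eq_card => u; rewrite !inE.
case: (u \in X0) => //=; case: (ltnP (r u) a) => //= h.
exact: leq_trans h hab.
Qed.

Lemma cnt_big r j : (#|U| <= j)%N -> cnt r j = #|X0|.
Proof.
move=> hj; rewrite /cnt; apply: eq_card => u; rewrite !inE.
by rewrite (leq_trans (ltn_ord (r u)) hj) andbT.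
Qed.

Lemma cnt0 r : cnt r 0 = 0%N.
Proof. by apply/eqP; rewrite cards_eq0; apply/eqP/setP => u; rewrite !inE ltn0 andbF. Qed.

Lemma cntI_le (L Rr : ranking U) a b : injective L -> injective Rr ->
  (forall u, (a <= L u < b)%N -> u \in X0) -> (cntI Rr a b <= cntI L a b)%N.
Proof.
move=> iL iR hX.
have bL : bijective L by apply: (inj_card_bij iL); rewrite card_ord.
case: bL => Li LK KL.
set A := [set u | (a <= Rr u < b)%N].
apply: (@leq_trans #|A|); first by apply: subset_leq_card; apply/subsetP => u; rewrite !inE => /andP[].
rewrite -(card_in_imset (f := Rr) (D := A)); last by move=> u v _ _; apply: iR.
rewrite /cntI -(card_in_imset (f := L) (D := [set x in X0 | (a <= L x < b)%N])); last by move=> u v _ _; apply: iL.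
apply: subset_leq_card; apply/subsetP => i /imsetP [u]; rewrite inE => hu ->.
apply/imsetP; exists (Li (Rr u)); last by rewrite KL.
by rewrite inE KL hu andbT; apply: hX; rewrite KL.
Qed.

Section CoreS.
Variable s : ranking U.
Hypothesis hs : feasible grp ub s.

Definition Pdom (L : ranking U) := feasible grp ub L && [forall x in X0, (L x <= s x)%N].
Definition pot (L : ranking U) := (\sum_(x in X0) (L x : nat))%N.

Lemma core_exists : exists L, [/\ feasible grp ub L, (forall x, x \in X0 -> (L x <= s x)%N) &
   forall Rr j, feasible grp ub Rr -> (cnt Rr j <= cnt L j)%N].
Proof.
have Ps : Pdom s by rewrite /Pdom hs; apply/forall_inP => x _.
case: (arg_minnP pot Ps) => L PL Lmin.
case/andP: PL => fL /forall_inP Ldom.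
exists L; split => //.
have iL := feas_inj fL.
have noimp : forall x y, x \in X0 -> y \notin X0 -> (L y < L x)%N -> ~~ feasible grp ub (sw L x y).
  move=> x y xX yX hyx; apply/negP => fsw.
  have hxy : x != y by apply/eqP => e; move: yX; rewrite -e xX.
  have swx : sw L x y x = L y by rewrite ffunE /tau eqxx.
  have swo z : z != x -> z \in X0 -> sw L x y z = L z.
    move=> zx zX; rewrite ffunE /tau (negPf zx); case: eqVneq => // e.
    by move: yX; rewrite -e zX.
  have : Pdom (sw L x y).
    rewrite /Pdom fsw; apply/forall_inP => z zX.
    case: (eqVneq z x) => [->|zx]; first by rewrite swx; apply: leq_trans (ltnW hyx) (Ldom x xX).
    by rewrite swo //; apply: Ldom.
  move/Lmin; rewrite /pot (bigD1 x xX) (bigD1 x xX (F := fun z => (sw L x y z : nat))) /= swx.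
  rewrite [X in (_ <= _ + X)%N -> _](eq_bigr (fun z => (L z : nat))); last by move=> z /andP[zX zx]; rewrite swo.
  by rewrite leq_add2r leqNgt hyx.
have ha : forall x y, x \in X0 -> y \notin X0 -> grp x = grp y -> (L x < L y)%N.
  move=> x y xX yX gxy; rewrite ltnNge; apply/negP => hle.
  have hxy : x != y by apply/eqP => e; move: yX; rewrite -e xX.
  have hyx : (L y < L x)%N.
    by rewrite ltn_neqAle hle andbT; apply: contra_neq (_ : y != x) => [/val_inj /iL|] //; rewrite eq_sym.
  move: (noimp x y xX yX hyx) => /negP; apply; apply: sw_feasible => //.
  by rewrite gxy eqxx.
move=> Rr j fR; rewrite leqNgt; apply/negP => hlt.
pose Pj j := [exists Rr : ranking U, feasible grp ub Rr && (cnt L j < cnt Rr j)%N].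
have exP : exists j, Pj j by exists j; apply/existsP; exists Rr; rewrite fR hlt.
case: (ex_minnP exP) => {j Rr fR hlt} j /existsP [Rr /andP [fR hlt]] jmin.
have jmin' : forall i R', (i < j)%N -> feasible grp ub R' -> (cnt R' i <= cnt L i)%N.
  move=> i R' hij fR'; rewrite leqNgt; apply/negP => h.
  have := jmin i; rewrite /Pj => /(_ (introT existsP (ex_intro _ R' (introT andP (conj fR' h))))).
  by rewrite leqNgt hij.
have jpos : (0 < j)%N.
  by rewrite lt0n; apply/negP => /eqP j0; move: hlt; rewrite j0 !cnt0.
have [k hk] : exists k, (cntk L k j < cntk Rr k j)%N.
  case: (boolP [exists k, (cntk L k j < cntk Rr k j)%N]) => [/existsP //|].
  rewrite negb_exists => /forallP hall; exfalso.
  move: hlt; rewrite !cnt_sum ltnNge => /negP; apply; apply: leq_sum => k _.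
  by rewrite leqNgt; exact: hall k.
have [x1 hx1] : exists x1, (x1 \in X0) && (grp x1 == k) && (j <= L x1)%N.
  case: (boolP [exists x1, (x1 \in X0) && (grp x1 == k) && (j <= L x1)%N]) => [/existsP //|].
  rewrite negb_exists => /forallP hn; exfalso.
  have : (cntk Rr k j <= cntk L k j)%N.
    apply: subset_leq_card; apply/subsetP => u; rewrite !inE => /andP[uX /andP[gu _]].
    by rewrite uX gu /=; move: (hn u); rewrite uX gu /= -ltnNge.
  by rewrite leqNgt hk.
case: (@arg_minnP _ x1 (fun z => (z \in X0) && (grp z == k) && (j <= L z)%N) (fun z => (L z : nat)) hx1) => x /andP[/andP[xX /eqP gx] jx] xmin.
have hb3 : forall u, grp u = k -> (L u < j)%N -> u \in X0.
  move=> u gu hu; apply/negPn/negP => uX.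
  have := ha x u xX uX (etrans gx (esym gu)) => hxu.
  have : (L x < j)%N by apply: ltn_trans hxu hu.
  by rewrite ltnNge jx.
have hb4 : forall i, (i < L x)%N -> (gcount L k i <= cntk L k j)%N.
  move=> i hi; apply: subset_leq_card; apply/subsetP => u; rewrite !inE => /andP[/eqP gu hu].
  have uLx : (L u < L x)%N := leq_ltn_trans hu hi.
  case: (ltnP (L u) j) => huj.
    by rewrite gu eqxx (hb3 u gu huj).
  exfalso; case: (boolP (u \in X0)) => uX.
    have := xmin u; rewrite uX gu eqxx huj => /(_ isT).
    by rewrite leqNgt uLx.
  have := ha x u xX uX (etrans gx (esym gu)).
  by rewrite ltnNge (ltnW uLx).
have hb5 : forall i, (j <= i.+1)%N -> (i < L x)%N -> (gcount L k i < ub k i.+1)%N.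
  move=> i hji hi; apply: (leq_ltn_trans (hb4 i hi)); apply: (leq_trans hk).
  have hiU : (i < #|U|)%N by apply: ltn_trans hi (ltn_ord (L x)).
  apply: leq_trans (feas_gcount k fR hiU).
  apply: subset_leq_card; apply/subsetP => u; rewrite !inE => /andP[_ /andP[-> hu]] /=.
  by rewrite -ltnS (leq_trans hu hji).
pose P (i : 'I_#|U|) := (i < j)%N && (ub k i.+1 <= gcount L k i)%N.
pose i0 := (\max_(i | P i) i.+1)%N.
have hi0j : (i0 <= j.-1)%N.
  apply/bigmax_leqP => i /andP[hij tight].
  have : (i : nat) != j.-1.
    apply/eqP => e.
    have hji : (j <= i.+1)%N by rewrite e prednK.
    have h := hb5 i hji (leq_trans hij jx).
    by move: h; rewrite ltnNge tight.
  move=> /eqP; lia.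
have hnt : forall i : nat, (i0 <= i)%N -> (i < j)%N -> (i < #|U|)%N -> (gcount L k i < ub k i.+1)%N.
  move=> i h1 h2 h3; rewrite ltnNge; apply/negP => tight.
  have := @leq_bigmax_cond _ P (fun i : 'I_#|U| => i.+1) (Ordinal h3).
  rewrite /P /= h2 tight => /(_ isT) h; rewrite -/i0 in h; lia.
have i0lt : (i0 < j)%N by lia.
have hmi := jmin' i0 Rr i0lt fR.
case: (boolP [exists y, (y \notin X0) && (i0 <= L y < j)%N]) => [/existsP [y /andP [yX /andP[hy1 hy2]]] | hno]; last first.
  rewrite negb_exists in hno; move/forallP in hno.
  have hall : forall u, (i0 <= L u < j)%N -> u \in X0.
    by move=> u hu; move: (hno u); rewrite hu andbT negbK.
  move: hlt; rewrite (cnt_split L (ltnW i0lt)) (cnt_split Rr (ltnW i0lt)) ltnNge => /negP; apply.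
  exact: leq_add hmi (cntI_le iL (feas_inj fR) hall).
have gy : grp y != k.
  apply/eqP => gy; have := ha x y xX yX (etrans gx (esym gy)).
  by rewrite ltnNge (leq_trans (ltnW hy2) jx).
have hyx : (L y < L x)%N := leq_trans hy2 jx.
move: (noimp x y xX yX hyx) => /negP; apply; apply: sw_feasible => //.
move=> _ i /andP[h1 h2]; rewrite gx.
case: (ltnP i j) => hij.
  apply: hnt => //; [exact: leq_trans hy1 h1 | exact: ltn_trans h2 (ltn_ord _)].
by apply: hb5 => //; apply: leqW.
Qed.
End CoreS.
End Core.

Section Sums.
Variables (R : realType) (U : finType).
Variables (f : nat -> R) (g : U -> R).

Lemma telesc (a : nat -> R) (p N : nat) :
  \sum_(i < N) (if (p <= i)%N then a i - a i.+1 else 0) = if (p <= N)%N then a p - a N else 0.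
Proof.
elim: N => [|N IH]; first by rewrite big_ord0; case: p => [|p] //=; rewrite subrr.
rewrite big_ord_recr /= IH.
case: (ltngtP p N) => hpN.
- have -> : (p <= N.+1)%N by lia.
  by rewrite addrA subrK.
- rewrite add0r; case: ifP => // h.
  have -> : p = N.+1 by lia.
  by rewrite subrr.
- by rewrite hpN leqnSn subrr add0r.
Qed.

Definition G (X : {set U}) (r : ranking U) :=
  \sum_(i < #|U|.-1) (f i.+1 - f i.+2) * (cnt X r i.+1)%:R.

Lemma sumf_eq (X : {set U}) (r : ranking U) :
  \sum_(u in X) f (r u).+1 = #|X|%:R * f #|U| + G X r.
Proof.
case: (posnP #|U|) => [h0|hpos].
  have XE : X = set0.
    apply/setP => u; rewrite inE; have := ltn_ord (r u); lia.
  rewrite XE big_set0 cards0 mul0r add0r /G big1 // => i _; have := ltn_ord i; lia.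
rewrite (eq_bigr (fun u => f #|U| + \sum_(i < #|U|.-1) (if ((r u : nat) <= i)%N then f i.+1 - f i.+2 else 0))); last first.
  move=> u _; rewrite (telesc (fun i => f i.+1)) -ltnS prednK // ltn_ord.
  by rewrite addrC subrK.
rewrite big_split /= sumr_const mulr_natl; congr (_ + _).
rewrite /G exchange_big /=; apply: eq_bigr => i _.
rewrite -big_mkcondr /= sumr_const mulr_natr; congr (_ *+ _).
rewrite /cnt; apply: eq_card => u; rewrite !inE ltnS.
by [].
Qed.


Hypothesis hf : forall i j : nat, (1 <= i)%N -> (i <= j)%N -> (j <= #|U|)%N -> f j <= f i.

Lemma G_le (X : {set U}) (L Rr : ranking U) :
  (forall j, (cnt X Rr j <= cnt X L j)%N) -> G X Rr <= G X L.
Proof.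
move=> hc; apply: ler_sum => i _; apply: ler_wpM2l; last by rewrite ler_nat.
rewrite subr_ge0; apply: hf => //; have := ltn_ord i; lia.
Qed.

Lemma sumV_le (X : {set U}) (L Rr : ranking U) :
  (forall j, (cnt X Rr j <= cnt X L j)%N) -> sumV f g Rr X <= sumV f g L X.
Proof.
move=> hc; rewrite /sumV /V !sumrB !sumf_eq lerB // lerD2l; exact: G_le.
Qed.
End Sums.

Unset Implicit Arguments.
Set Strict Implicit.

Theorem mainTheorem12 (R : realType) (U : finType) (t : nat)
  (grp : U -> 'I_t) (ub : 'I_t -> nat -> nat) (f : nat -> R) (g : U -> R)
  (hU : (0 < #|U|)%N)
  (hf : forall i j : nat, (1 <= i)%N -> (i <= j)%N -> (j <= #|U|)%N -> f j <= f i)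
  (hS : exists r, feasible grp ub r)
  (F : {ffun ranking U -> R})
  (hF : maxmin_fair grp ub f g F) :
  exists (u0 : U) (X0 : {set U}) (h0 : R),
    [/\ X0 != set0, is_H grp ub f g X0 h0,
        expV f g F u0 = h0 / #|X0|%:R,
        (forall u, expV f g F u0 <= expV f g F u) &
        (forall (X : {set U}) (h : R), X != set0 -> is_H grp ub f g X h ->
            h0 / #|X0|%:R <= h / #|X|%:R)].
Proof.
case: hF => [[F0 [F1 Fsupp]] hfair].
pose E u := expV f g F u.
case/card_gt0P: hU => ua _.
case: (@arg_minP _ R U ua xpredT E isT) => u0 _ hmin0.
have hmin : forall u, E u0 <= E u by move=> u; exact: hmin0.
set m := E u0.
have avgF : forall (X : {set U}) h, (forall r, feasible grp ub r -> sumV f g r X <= h) ->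
    \sum_(u in X) E u <= h.
  move=> X h hX.
  rewrite /E /expV exchange_big /=.
  apply: (@le_trans _ _ (\sum_r F r * h)); last by rewrite -mulr_suml F1 mul1r.
  apply: ler_sum => r _; rewrite -mulr_sumr.
  case: (eqVneq (F r) 0) => [->|nz]; first by rewrite !mul0r.
  by apply: ler_wpM2l => //; apply: hX; apply: Fsupp.
have lowF : forall (X : {set U}), #|X|%:R * m <= \sum_(u in X) E u.
  move=> X; rewrite mulr_natl -sumr_const; apply: ler_sum => u _; exact: hmin.
pose X0 := [set u | E u == m].
have u0X : u0 \in X0 by rewrite inE.
have X0n : X0 != set0 by apply/set0Pn; exists u0.
have X0E : forall u, u \in X0 -> E u = m by move=> u; rewrite inE => /eqP.
case: hS => rs fs.
case: (@arg_maxP _ R (ranking U) rs (feasible grp ub) (fun r => sumV f g r X0) fs) => rmax frmax hrmax.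
pose h0 := sumV f g rmax X0.
have H0 : is_H grp ub f g X0 h0.
  by split; [exists rmax | move=> r fr; exact: hrmax].
have sumX0 : \sum_(u in X0) E u = #|X0|%:R * m.
  by rewrite mulr_natl -sumr_const; apply: eq_bigr => u /X0E.
have cardX0 : 0 < #|X0|%:R :> R by rewrite ltr0n lt0n cards_eq0.
have hh0 : h0 = #|X0|%:R * m.
  apply/eqP; rewrite eq_le; apply/andP; split; last first.
    by rewrite -sumX0; apply: avgF => r fr; exact: hrmax.
  rewrite leNgt; apply/negP => hlt.
  pose good (s L : ranking U) := [&& feasible grp ub L, [forall x in X0, (L x <= s x)%N] &
     [forall r, feasible grp ub r ==> (sumV f g r X0 <= sumV f g L X0)]].
  pose Phi s := if [pick L | good s L] is Some L then L else s.
  have hPhi : forall s, feasible grp ub s -> good s (Phi s).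
    move=> s fs'; rewrite /Phi; case: pickP => // hn; exfalso.
    have [L [fL dom cnts]] := @core_exists _ _ grp ub X0 s fs'.
    have : good s L.
      rewrite /good fL /=; apply/andP; split.
        by apply/forall_inP => x xX; exact: dom.
      apply/forallP => r; apply/implyP => fr; apply: (sumV_le g hf) => j; exact: cnts fr.
    by rewrite hn.
  pose D : {ffun ranking U -> R} := [ffun L => \sum_(s | Phi s == L) F s].
  have DE : forall (w : ranking U -> R), \sum_L D L * w L = \sum_s F s * w (Phi s).
    move=> w; rewrite [RHS](partition_big Phi xpredT) //=; apply: eq_bigr => L _.
    rewrite ffunE mulr_suml; apply: eq_big => [s|s /eqP ->] //.
  have Ddistr : is_distr grp ub D.
    split; [move=> L; rewrite ffunE; apply: sumr_ge0 => s _; exact: F0 | split].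
      rewrite -[RHS]F1 -(eq_bigr _ (fun L _ => mulr1 (D L))) DE.
      by apply: eq_bigr => s _; exact: mulr1.
    move=> L; rewrite ffunE => nz.
    have [s /andP[/eqP Ls Fs]] : exists s, (Phi s == L) && (F s != 0).
      apply/existsP; apply: contraR nz; rewrite negb_exists => /forallP hall.
      by rewrite big1 // => s hs; move: (hall s); rewrite hs /= negbK => /eqP.
    by rewrite -Ls; have := hPhi s (Fsupp s Fs) => /and3P[].
  have expD : forall u, expV f g D u = \sum_s F s * V f g (Phi s) u.
    by move=> u; rewrite /expV DE.
  have domD : forall x, x \in X0 -> E x <= expV f g D x.
    move=> x xX; rewrite expD /E /expV; apply: ler_sum => s _.
    case: (eqVneq (F s) 0) => [->|nz]; first by rewrite !mul0r.
    apply: ler_wpM2l => //; rewrite /V lerD2r; apply: hf => //.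
    have := hPhi s (Fsupp s nz) => /and3P[_ /forall_inP hd _].
    by rewrite ltnS hd.
  have sumD : h0 <= \sum_(x in X0) expV f g D x.
    under eq_bigr do rewrite expD.
    rewrite exchange_big /=.
    apply: (@le_trans _ _ (\sum_s F s * h0)); first by rewrite -mulr_suml F1 mul1r.
    apply: ler_sum => s _; rewrite -mulr_sumr.
    case: (eqVneq (F s) 0) => [->|nz]; first by rewrite !mul0r.
    apply: ler_wpM2l => //.
    by have := hPhi s (Fsupp s nz) => /and3P[_ _ /forallP /(_ rmax)]; rewrite frmax.
  have [x xX hx] : exists2 x, x \in X0 & E x < expV f g D x.
    case: (boolP [exists x in X0, E x < expV f g D x]) => [/exists_inP [x xX hx]|]; first by exists x.
    rewrite negb_exists_in => /forall_inP hall; exfalso.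
    have : \sum_(x in X0) expV f g D x <= \sum_(x in X0) E x.
      by apply: ler_sum => x xX; rewrite leNgt hall.
    rewrite sumX0 => hle.
    by have := lt_le_trans hlt (le_trans sumD hle); rewrite ltxx.
  have [v [hv1 hv2]] := hfair D x Ddistr hx.
  have Ev : E v == m.
    rewrite eq_le hmin andbT; apply: le_trans hv2 _; rewrite -(X0E x xX); exact: lexx.
  have vX : v \in X0 by rewrite inE.
  have := domD v vX.
  by rewrite leNgt hv1.
exists u0, X0, h0; split => //.
- by rewrite hh0 [_ * m]mulrC mulfK // gt_eqF.
- move=> X h Xn [_ hX].
  rewrite hh0 [_ * m]mulrC mulfK ?gt_eqF //.
  have cX : 0 < #|X|%:R :> R by rewrite ltr0n lt0n cards_eq0.
  rewrite ler_pdivlMr // mulrC.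
  exact: le_trans (lowF X) (avgF X h hX).
Qed.
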